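(* Assume $\sigma^2=0$, and let $g(\underline\phi)=\sum_{(l,k)}\alpha_{lk}\beta_{llk}^2\phi_{lk}^HD_l^{-1}\phi_{lk}$ with $D_l=\sum_{(i,j)}\beta_{lij}\phi_{ij}\phi_{ij}^H$, defined on the open set of pilot collections for which every $D_l$ is invertible. Let $\underline{\tilde\phi}$ be a stationary point of $g$ (unconstrained, i.e. with zero gradient) in this set with every $\tilde\phi_{lk}\neq 0$, and set $\delta=\min_{(l,k)}\sqrt{\tau P_{\max}}/\|\tilde\phi_{lk}\|$ and $\phi^\star_{lk}=\delta\tilde\phi_{lk}$ for all $(l,k)$. Then $\underline\phi^\star$ satisfies $\|\phi^\star_{lk}\|^2\le\tau P_{\max}$ for all $(l,k)$ and is a stationary (KKT) point of the problem of maximizing $g$ subject to $\|\phi_{lk}\|^2\le\tau P_{\max}$ for all $(l,k)$.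
   Context: $L$ cells indexed by $l,i$, each with $K$ users indexed by $k,j$; sums over $(i,j)$ or $(l,k)$ range over all $LK$ users. Pilot length $\tau$, power budget $P_{\max}>0$, large-scale fading coefficients $\beta_{lij}>0$, weights $\alpha_{lk}>0$, pilots $\phi_{lk}\in\mathbb C^\tau$. *)

(* Defs.v *)
(* Complex scalars are an arbitrary numClosedFieldType C
   (e.g. algC); real scalars are the elements x with x \is Num.real. *)
From HB Require Import structures.
From mathcomp Require Import all_boot all_order all_algebra.
Set Implicit Arguments. Unset Strict Implicit. Unset Printing Implicit Defensive.
Import Order.TTheory GRing.Theory Num.Theory.
Local Open Scope ring_scope.

Section PilotDefs.
Variable C : numClosedFieldType.

Definition herm m n (A : 'M[C]_(m, n)) : 'M[C]_(n, m) :=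
  (map_mx (fun z : C => z^*) A)^T.

Definition pilots (L K tau : nat) := 'I_L -> 'I_K -> 'cV[C]_tau.

Definition sqnorm tau (v : 'cV[C]_tau) : C := \sum_(i < tau) `|v i 0| ^+ 2.
Definition vnorm tau (v : 'cV[C]_tau) : C := sqrtC (sqnorm v).

Definition Dmat L K tau (beta : 'I_L -> 'I_L -> 'I_K -> C)
  (phi : pilots L K tau) (l : 'I_L) : 'M[C]_tau :=
  \sum_(i < L) \sum_(j < K) beta l i j *: (phi i j *m herm (phi i j)).

Definition gobj L K tau (alpha : 'I_L -> 'I_K -> C)
  (beta : 'I_L -> 'I_L -> 'I_K -> C) (phi : pilots L K tau) : C :=
  \sum_(l < L) \sum_(k < K)
     alpha l k * (beta l l k) ^+ 2 *
     (herm (phi l k) *m invmx (Dmat beta phi l) *m phi l k) 0 0.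

Definition in_domain L K tau (beta : 'I_L -> 'I_L -> 'I_K -> C)
  (phi : pilots L K tau) : Prop := forall l, Dmat beta phi l \in unitmx.

Definition padd L K tau (phi : pilots L K tau) (t : C) (V : pilots L K tau)
  : pilots L K tau := fun l k => phi l k + t *: V l k.

Definition hasderiv0 (f : C -> C) (d : C) : Prop :=
  forall e : C, 0 < e -> exists2 r : C, 0 < r &
    forall t : C, t \is Num.real -> 0 < `|t| < r ->
      `|(f t - f 0) / t - d| < e.

(* unconstrained stationary point: every (real) directional derivative is 0,
   i.e. the gradient vanishes *)
Definition stationary L K tau (G : pilots L K tau -> C) (phi : pilots L K tau)
  : Prop :=
  forall V : pilots L K tau, hasderiv0 (fun t => G (padd phi t V)) 0.

(* KKT point of  max G  s.t.  ||phi_lk||^2 <= c  for all (l,k):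
   multipliers mu_lk >= 0, complementary slackness, and stationarity of the
   Lagrangian G - sum mu_lk (||phi_lk||^2 - c) (gradient of G equals
   sum mu_lk * gradient of ||phi_lk||^2). *)
Definition KKT_point L K tau (G : pilots L K tau -> C) (c : C)
  (phi : pilots L K tau) : Prop :=
  exists mu : 'I_L -> 'I_K -> C,
    [/\ forall l k, 0 <= mu l k,
        forall l k, mu l k * (sqnorm (phi l k) - c) = 0 &
        forall V : pilots L K tau,
          hasderiv0 (fun t => G (padd phi t V)
               - \sum_(l < L) \sum_(k < K)
                   mu l k * (sqnorm (padd phi t V l k) - c)) 0].

End PilotDefs.

(* Main.v *)
From Pilot Require Import Defs.
From HB Require Import structures.
From mathcomp Require Import all_boot all_order all_algebra.
From Stdlib Require Import FunctionalExtensionality.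
Import Order.TTheory GRing.Theory Num.Theory.
Local Open Scope ring_scope.

Lemma hermZ (C : numClosedFieldType) m n (c : C) (A : 'M[C]_(m,n)) :
  herm (c *: A) = c^* *: herm A.
Proof. by apply/matrixP => i j; rewrite !mxE rmorphM. Qed.

Lemma hermD (C : numClosedFieldType) m n (A B : 'M[C]_(m,n)) :
  herm (A + B) = herm A + herm B.
Proof. by apply/matrixP => i j; rewrite !mxE rmorphD. Qed.


Lemma pow_diff_le (R : numDomainType) (s : R) (i : nat) :
  `|s| <= 1 -> `|s ^+ i - 0 ^+ i| <= `|s|.
Proof.
move=> s1; case: i => [|n]; first by rewrite !expr0 subrr normr0.
rewrite expr0n /= subr0 normrX exprS.
have h0 : 0 <= `|s| by [].
by rewrite ler_piMr // exprn_ile1.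
Qed.

Lemma poly_nz_near0 (R : numFieldType) (p : {poly R}) :
  p.[0] != 0 -> exists2 r : R, 0 < r & forall s, `|s| < r -> p.[s] != 0.
Proof.
move=> p0.
set M : R := \sum_(i < size p) `|p`_i| + `|p.[0]| + 1.
have Ms : 0 <= \sum_(i < size p) `|p`_i| by apply: sumr_ge0.
have Mp0 : `|p.[0]| <= M by rewrite /M -addrA addrCA lerDl addr_ge0.
have Mgt0 : 0 < M by rewrite /M ltr_wpDl // addr_ge0.
have Mg : \sum_(i < size p) `|p`_i| <= M.
  by rewrite /M -addrA lerDl addr_ge0.
exists (`|p.[0]| / M); first by rewrite divr_gt0 // normr_gt0.
move=> s hs.
have s1 : `|s| <= 1.
  apply: ltW; apply: (lt_le_trans hs). by rewrite ler_pdivrMr // mul1r.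
have key : `|p.[s] - p.[0]| <= M * `|s|.
  have -> : p.[s] - p.[0] = \sum_(i < size p) p`_i * (s ^+ i - 0 ^+ i).
    rewrite !horner_coef -sumrB; apply: eq_bigr => i _; by rewrite mulrBr.
  apply: (le_trans (ler_norm_sum _ _ _)).
  apply: (@le_trans _ _ (\sum_(i < size p) `|p`_i| * `|s|)).
    apply: ler_sum => i _; rewrite normrM; apply: ler_wpM2l => //.
    exact: pow_diff_le.
  by rewrite -mulr_suml ler_wpM2r.
apply/eqP => ps.
move: key; rewrite ps sub0r normrN.
have : M * `|s| < `|p.[0]|.
  by rewrite mulrC -ltr_pdivlMr.
move=> h1 h2; by move: (le_lt_trans h2 h1); rewrite ltxx.
Qed.

Section Exp.
Variables (C : numClosedFieldType) (L K tau : nat) (beta : 'I_L -> 'I_L -> 'I_K -> C)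
  (phi W : pilots C L K tau).

Definition A1 l : 'M[C]_tau := \sum_(i < L) \sum_(j < K)
  beta l i j *: (phi i j *m herm (W i j) + W i j *m herm (phi i j)).
Definition A2 l : 'M[C]_tau := \sum_(i < L) \sum_(j < K)
  beta l i j *: (W i j *m herm (W i j)).

Lemma Dmat_expand (t : C) l : t \is Num.real ->
  Dmat beta (padd phi t W) l = Dmat beta phi l + t *: A1 l + (t * t) *: A2 l.
Proof.
move=> tr.
rewrite /Dmat /A1 /A2 !scaler_sumr -!big_split; apply: eq_bigr => i _.
rewrite !scaler_sumr -!big_split; apply: eq_bigr => j _ /=.
rewrite /padd hermD hermZ (conj_Creal tr) mulmxDl !mulmxDr.
rewrite -!scalemxAl -!scalemxAr !scalerDr !scalerA.
rewrite (mulrC t (beta l i j)) (mulrC (t * t) (beta l i j)) -!scalerA.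
rewrite -!addrA; congr (_ + _); rewrite addrC -!addrA; congr (_ + _).
Qed.

Definition Pm l : 'M[{poly C}]_tau :=
  map_mx polyC (Dmat beta phi l) + 'X *: map_mx polyC (A1 l)
  + 'X^2 *: map_mx polyC (A2 l).

Lemma Pm_eval (t : C) l :
  map_mx (horner_eval t) (Pm l) = Dmat beta phi l + t *: A1 l + (t * t) *: A2 l.
Proof.
apply/matrixP => a b; rewrite !mxE /= horner_evalE !hornerE.
by rewrite expr2.
Qed.

Lemma dom_near : in_domain beta phi ->
  exists2 r : C, 0 < r & forall t, t \is Num.real -> `|t| < r ->
    in_domain beta (padd phi t W).
Proof.
move=> dom.
pose p := \prod_(l < L) \det (Pm l).
have evp t : p.[t] = \prod_(l < L) \det (Dmat beta phi l + t *: A1 l + (t * t) *: A2 l).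
  rewrite /p horner_prod; apply: eq_bigr => l _.
  by rewrite -Pm_eval det_map_mx.
have p0 : p.[0] != 0.
  rewrite evp; apply/prodf_neq0 => l _.
  rewrite scale0r mul0r scale0r !addr0.
  by move: (dom l); rewrite unitmxE unitfE.
have [r r0 hr] := @poly_nz_near0 C p p0.
exists r => // t tr tlt l.
rewrite unitmxE unitfE Dmat_expand //.
by move: (hr t tlt); rewrite evp => /prodf_neq0 /(_ l isT).
Qed.
End Exp.

Lemma DmatZ (C : numClosedFieldType) L K tau beta (psi : pilots C L K tau) (c : C) l :
  Dmat beta (fun i j => c *: psi i j) l = (c * c^*) *: Dmat beta psi l.
Proof.
rewrite /Dmat scaler_sumr; apply: eq_bigr => i _.
rewrite scaler_sumr; apply: eq_bigr => j _.
rewrite hermZ -scalemxAl -scalemxAr !scalerA; by congr (_ *: _); rewrite [RHS]mulrC mulrA.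
Qed.

Lemma gobjZ (C : numClosedFieldType) L K tau alpha beta (psi : pilots C L K tau) (c : C) :
  in_domain beta psi -> c != 0 ->
  gobj alpha beta (fun i j => c *: psi i j) = gobj alpha beta psi.
Proof.
move=> dom c0.
have cc : c * c^* != 0 by rewrite mulf_neq0 // conjC_eq0.
rewrite /gobj; apply: eq_bigr => l _; apply: eq_bigr => k _.
rewrite DmatZ invmxZ; last by rewrite unitmxZ ?unitfE ?cc ?dom.
congr (_ * _).
rewrite hermZ -!scalemxAl -!scalemxAr -!scalemxAl !scalerA.
have -> : c^* * (c / (c * c^*)) = 1 by rewrite mulrA (mulrC c^*) divff.
by rewrite scale1r.
Qed.

Lemma sqnorm_gt0 (C : numClosedFieldType) tau (v : 'cV[C]_tau) :
  v != 0 -> 0 < sqnorm v.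
Proof.
move=> vn; rewrite lt0r; apply/andP; split; last first.
  by apply: sumr_ge0 => i _; rewrite exprn_ge0.
apply/eqP => h; move/eqP: vn; apply; apply/matrixP => i j.
rewrite (ord1 j) mxE.
have := psumr_eq0P (fun i _ => exprn_ge0 2 (normr_ge0 (v i 0))) h (i:=i) isT.
by move/eqP; rewrite expf_eq0 /= normr_eq0 => /eqP.
Qed.

Lemma sqnormZ (C : numClosedFieldType) tau (c : C) (v : 'cV[C]_tau) :
  sqnorm (c *: v) = `|c| ^+ 2 * sqnorm v.
Proof.
rewrite /sqnorm mulr_sumr; apply: eq_bigr => i _.
by rewrite mxE normrM exprMn.
Qed.

Theorem proposition3 (C : numClosedFieldType) (L K tau : nat) (Pmax : C)
  (alpha : 'I_L -> 'I_K -> C) (beta : 'I_L -> 'I_L -> 'I_K -> C)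
  (phit : pilots C L K tau) (delta : C) :
  0 < Pmax ->
  (forall l i j, 0 < beta l i j) ->
  (forall l k, 0 < alpha l k) ->
  in_domain beta phit ->
  stationary (gobj alpha beta) phit ->
  (forall l k, phit l k != 0) ->
  (* delta = min_(l,k) sqrt(tau Pmax) / ||phit_lk|| *)
  (forall l k, delta <= sqrtC (tau%:R * Pmax) / vnorm (phit l k)) ->
  (exists l k, delta = sqrtC (tau%:R * Pmax) / vnorm (phit l k)) ->
  let phistar := fun l k => delta *: phit l k in
  (forall l k, sqnorm (phistar l k) <= tau%:R * Pmax) /\
  KKT_point (gobj alpha beta) (tau%:R * Pmax) phistar.
Proof.
move=> P0 bpos apos dom stat nz hdel [l0 [k0 hd]] phistar.
have taupos : (0 < tau)%N.
  case: tau phit dom stat nz hdel hd phistar => // phit' _ _ nz' _ _ _.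
  by move: (nz' l0 k0); rewrite flatmx0 eqxx.
have tP : 0 < tau%:R * Pmax by rewrite mulr_gt0 // ltr0n.
have vpos l k : 0 < vnorm (phit l k) by rewrite sqrtC_gt0 sqnorm_gt0.
have dpos : 0 < delta by rewrite hd divr_gt0 // sqrtC_gt0.
split.
  move=> l k; rewrite /phistar sqnormZ (ger0_norm (ltW dpos)).
  have h1 : delta * vnorm (phit l k) <= sqrtC (tau%:R * Pmax).
    by rewrite -ler_pdivlMr // hdel.
  have h2 : (delta * vnorm (phit l k)) ^+ 2 <= sqrtC (tau%:R * Pmax) ^+ 2.
    by rewrite ler_pXn2r // nnegrE ?sqrtC_ge0 ?ltW // mulr_gt0.
  by rewrite exprMn /vnorm sqrtCK sqrtCK in h2.
exists (fun _ _ => 0); split => [l k|l k|V]; first exact: lexx.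
  exact: mul0r.
pose W : pilots C L K tau := fun l k => delta^-1 *: V l k.
have [r2 r2pos hr2] := @dom_near C L K tau beta phit W dom.
have d0 : delta != 0 by rewrite gt_eqF.
have key t : t \is Num.real -> `|t| < r2 ->
   gobj alpha beta (padd phistar t V) = gobj alpha beta (padd phit t W).
  move=> tr tlt.
  have -> : padd phistar t V = (fun l k => delta *: padd phit t W l k).
    apply: functional_extensionality => l; apply: functional_extensionality => k.
    by rewrite /padd /phistar /W scalerDr !scalerA mulrC mulrA mulVf // mul1r.
  by rewrite gobjZ //; apply: hr2.
move=> e e0.
have [r1 r1pos hr1] := stat W e e0.
have Z t : \sum_(l < L) \sum_(k < K) (0:C) * (sqnorm (padd phistar t V l k) - tau%:R * Pmax) = 0.
  by rewrite big1 // => l _; rewrite big1 // => k _; rewrite mul0r.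
have main r : 0 < r -> r <= r1 -> r <= r2 -> exists2 r0 : C, 0 < r0 &
  forall t, t \is Num.real -> 0 < `|t| < r0 ->
    `|(gobj alpha beta (padd phistar t V) - \sum_(l < L) \sum_(k < K) (0:C) * (sqnorm (padd phistar t V l k) - tau%:R * Pmax)
     - (gobj alpha beta (padd phistar 0 V) - \sum_(l < L) \sum_(k < K) (0:C) * (sqnorm (padd phistar 0 V l k) - tau%:R * Pmax))) / t - 0| < e.
  move=> rp h1 h2; exists r => // t tr /andP[t0 tlt].
  rewrite !Z !subr0 key // ?(lt_le_trans tlt) // key ?real0 ?normr0 //.
  by have := hr1 t tr; rewrite t0 (lt_le_trans tlt h1) subr0; apply.
have r1r : r1 \is Num.real by rewrite gtr0_real.
have r2r : r2 \is Num.real by rewrite gtr0_real.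
case: (boolP (r1 <= r2)) => h.
  exact: (main r1 r1pos (lexx _) h).
apply: (main r2 r2pos _ (lexx _)); rewrite real_leNgt //.
by apply/negP => /ltW; apply/negP.
Qed.
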